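(* In the 1-sided False Positive regime, when the realized subgraph may contain cycles, any algorithm requires $\Omega(m\log m)$ queries in the worst case (over moldgraphs with $m$ edges and such realized subgraphs) to discover a realized spanning tree with constant failure probability.
   Context: Problem (graph connectivity with noisy queries): a graph $G=(V,E)$ (possibly with parallel edges), the moldgraph, with $m$ edges is given. An adversary selects an arbitrary connected spanning subgraph of $G$ to be realized. The algorithm may query an oracle on any edge $e$ (``Is $e$ realized?''), receiving ``Yes''/``No''; each query costs $1$; answers to distinct queries (including repeated queries of the same edge) are independent. Goal: output a spanning tree of $G$ all of whose edges are realized. In the 1-sided False Positive regime: for a realized edge the answer is always ``Yes''; for a non-realized edge the answer is ``Yes'' with a constant probability $p<1/2$ and ``No'' with probability $1-p$. *)

(* Defs.v *)
From mathcomp Require Import all_boot.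
From Stdlib Require Import Reals.

Set Implicit Arguments.
Unset Strict Implicit.
Unset Printing Implicit Defensive.

Section Graph.
Variables (V E : finType) (ends : E -> V * V).

Definition adj (S : {set E}) : rel V :=
  fun u v => [exists e in S, (ends e == (u, v)) || (ends e == (v, u))].

Definition connectedS (S : {set E}) : bool :=
  [forall u, forall v, connect (adj S) u v].

(** (V, S) is a spanning tree: connected and acyclic, the latter expressed as
    "every edge of S is a bridge" (minimally connected; loops are never bridges). *)
Definition spanning_tree (S : {set E}) : bool :=
  connectedS S && [forall e in S, ~~ connectedS (S :\ e)].

Definition admissible_realization (Rz : {set E}) : bool := connectedS Rz.
End Graph.

(** * Randomized adaptive query algorithms
    A (randomized, adaptive) algorithm is a finite decision tree whose nodes are
    - [Out S]        : stop and output the edge set S,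
    - [Coin q a b]   : internal randomness: continue with [a] w.p. q, else [b]
                       (q is clamped into [0,1]),
    - [Query e a b]  : query edge e (cost 1); continue with [a] on "Yes",
                       with [b] on "No".
   Since the graph is finite, every randomized algorithm with bounded number of
   queries is a finitely supported mixture of deterministic decision trees and
   can thus be written in this form. *)
Inductive alg (E : finType) : Type :=
| Out of {set E}
| Coin of R & alg E & alg E
| Query of E & alg E & alg E.

Definition clamp01 (q : R) : R := Rmin 1 (Rmax 0 q).

(** Probability that the algorithm outputs a spanning tree of the moldgraph all
    of whose edges are realized, when the realized edge set is [Rz] and the
    oracle is 1-sided false positive with parameter [p]:
    a realized edge always answers "Yes"; a non-realized edge answers "Yes"
    w.p. [p] and "No" w.p. [1-p]; answers to distinct queries (including
    repetitions of the same edge) are independent. *)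
Fixpoint success_prob (V E : finType) (ends : E -> V * V) (p : R)
    (Rz : {set E}) (A : alg E) : R :=
  match A with
  | Out T0 => if spanning_tree ends T0 && (T0 \subset Rz) then 1%R else 0%R
  | Coin q a b => (clamp01 q * success_prob ends p Rz a
                   + (1 - clamp01 q) * success_prob ends p Rz b)%R
  | Query e a b =>
      if e \in Rz then success_prob ends p Rz a
      else (p * success_prob ends p Rz a + (1 - p) * success_prob ends p Rz b)%R
  end.

(** Worst-case number of queries made by the algorithm on realized set [Rz]:
    the maximum number of queries along an execution path that has positive
    probability (for 0 < p < 1). *)
Fixpoint query_cost (E : finType) (Rz : {set E}) (A : alg E) : nat :=
  match A with
  | Out _ => 0
  | Coin q a b =>
      if Rle_dec (clamp01 q) 0 then query_cost Rz b
      else if Rle_dec 1 (clamp01 q) then query_cost Rz a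
      else maxn (query_cost Rz a) (query_cost Rz b)
  | Query e a b =>
      (if e \in Rz then query_cost Rz a
       else maxn (query_cost Rz a) (query_cost Rz b)).+1
  end.

(* Main.v *)
Require Import Defs.
From mathcomp Require Import all_boot.
From Stdlib Require Import Reals Lra Classical.
Open Scope R_scope.

Section Reals.
Variables (p th : R).
Hypotheses (p0 : 0 < p) (p1 : p < 1) (th0 : 0 < th).

Definition cP := 1 - ln p.
Definition tau := th * cP.

Definition G (w b : R) : R :=
  if Rle_dec w (th * b) then w else th * b * (1 + ln (w / (th * b))).

Definition phi3 (w0 w1 wb : R) : R := w0 + w1 + wb - Rmin (G w0 wb) (G w1 wb).

Lemma lnp_neg : ln p < 0.
Proof. rewrite -ln_1; apply ln_increasing; lra. Qed.

Lemma c1_ge1 : 1 <= cP.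
Proof. unfold cP; have := lnp_neg; lra. Qed.

Lemma ln_le' x y : 0 < x -> x <= y -> ln x <= ln y.
Proof.
intros hx hxy; destruct (Req_dec x y) as [->|hne]; [lra|].
left; apply ln_increasing; lra.
Qed.

Lemma one_ln x : 0 < x -> 1 + ln x <= x.
Proof. intros hx; have := exp_ineq1_le (ln x); rewrite exp_ln; lra. Qed.

Lemma G_le w b : 0 <= w -> 0 <= b -> G w b <= w.
Proof.
intros hw hb; unfold G; destruct (Rle_dec w (th * b)) as [h|h]; cbv [is_left]; [lra|].
destruct (Req_dec b 0) as [->|hb0]; [rewrite Rmult_0_r !Rmult_0_l; lra|].
have htb : 0 < th * b by apply Rmult_lt_0_compat; lra.
have := one_ln (w / (th * b)) ltac:(apply Rdiv_lt_0_compat; lra).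
intros H.
replace w with (th * b * (w / (th * b))) at 2 by (field; lra).
apply Rmult_le_compat_l; lra.
Qed.

Lemma G_b0 w : 0 <= w -> G w 0 = 0.
Proof.
intros hw; unfold G; rewrite Rmult_0_r.
destruct (Rle_dec w 0); cbv [is_left]; [lra|ring].
Qed.

Lemma G_diff w b : 0 <= w -> 0 <= b -> G w b - G (p * w) b <= tau * b.
Proof.
intros hw hb.
have hc := c1_ge1. have hl := lnp_neg.
have htb : 0 <= th * b by apply Rmult_le_pos; lra.
have hpw : p * w <= w by (have := Rmult_le_compat_r w p 1 hw; lra).
have hpw0 : 0 <= p * w by apply Rmult_le_pos; lra.
have htau : th * b <= tau * b.
  unfold tau; rewrite Rmult_assoc (Rmult_comm cP) -Rmult_assoc.
  have := Rmult_le_compat_l (th * b) 1 cP htb hc; lra.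
unfold G; destruct (Rle_dec w (th * b)) as [h1|h1];
  destruct (Rle_dec (p * w) (th * b)) as [h2|h2]; cbv [is_left]; try lra.
-
  destruct (Req_dec b 0) as [->|hb0].
  { rewrite Rmult_0_r !Rmult_0_l; lra. }
  have htb' : 0 < th * b by apply Rmult_lt_0_compat; lra.
  have hln : ln (w / (th * b)) <= - ln p.
    rewrite -ln_Rinv; last lra. apply ln_le'.
    apply Rdiv_lt_0_compat; lra.
    apply (Rmult_le_reg_r (th * b * p)). apply Rmult_lt_0_compat; lra.
    replace (w / (th * b) * (th * b * p)) with (p * w) by (field; lra).
    replace (/ p * (th * b * p)) with (th * b) by (field; lra). lra.
  have : th * b * (1 + ln (w / (th * b))) <= th * b * cP.
    apply Rmult_le_compat_l; unfold cP; lra.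
  have := Rmult_le_compat_l (th * b) 1 cP htb hc.
  unfold tau in *. lra.
- destruct (Req_dec b 0) as [->|hb0].
  { rewrite Rmult_0_r !Rmult_0_l; lra. }
  have htb' : 0 < th * b by apply Rmult_lt_0_compat; lra.
  replace (p * w / (th * b)) with (p * (w / (th * b))) by (field; lra).
  rewrite ln_mult; [|lra|apply Rdiv_lt_0_compat; lra].
  have : th * b * (1 + ln (w / (th * b))) - th * b * (1 + (ln p + ln (w / (th * b))))
       = th * b * (- ln p) by ring.
  intros ->.
  have : th * b * (- ln p) <= th * b * cP by apply Rmult_le_compat_l; unfold cP; lra.
  unfold tau; lra.
Qed.

Lemma phi_out w0 w1 wb : 0 <= w0 -> 0 <= w1 -> 0 <= wb ->
  wb + Rmax w0 w1 <= phi3 w0 w1 wb.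
Proof.
intros h0 h1 hb; unfold phi3.
have := G_le w0 wb h0 hb; have := G_le w1 wb h1 hb.
unfold Rmin, Rmax; destruct (Rle_dec w0 w1); destruct (Rle_dec (G w0 wb) (G w1 wb)); cbv [is_left]; lra.
Qed.

Lemma phi_sym w0 w1 wb : phi3 w0 w1 wb = phi3 w1 w0 wb.
Proof. unfold phi3; rewrite Rmin_comm; ring. Qed.

Lemma phi_query0 w0 w1 wb : 0 <= w0 -> 0 <= w1 -> 0 <= wb ->
  phi3 (p * w0) w1 wb + phi3 ((1 - p) * w0) 0 0 <= (1 + tau) * phi3 w0 w1 wb.
Proof.
intros h0 h1 hb.
have hq : 0 <= (1 - p) * w0 by apply Rmult_le_pos; lra.
have Hz : phi3 ((1 - p) * w0) 0 0 = (1 - p) * w0.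
  unfold phi3; rewrite !G_b0; try lra; unfold Rmin; destruct (Rle_dec 0 0); cbv [is_left]; lra.
rewrite Hz.
have Ho := phi_out w0 w1 wb h0 h1 hb.
have Hm : wb <= phi3 w0 w1 wb by (have := Rmax_l w0 w1; lra).
have ht : 0 <= tau by (unfold tau; have := c1_ge1; intros; apply Rmult_le_pos; lra).
have Ht := Rmult_le_compat_l tau _ _ ht Hm.
have Hd := G_diff w0 wb h0 hb.
have Htb : 0 <= tau * wb by apply Rmult_le_pos; lra.
unfold phi3 in *.
unfold Rmin in *; destruct (Rle_dec (G (p * w0) wb) (G w1 wb));
  destruct (Rle_dec (G w0 wb) (G w1 wb)); cbv [is_left]; lra.
Qed.

Lemma phi_query1 w0 w1 wb : 0 <= w0 -> 0 <= w1 -> 0 <= wb ->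
  phi3 w0 (p * w1) wb + phi3 0 ((1 - p) * w1) 0 <= (1 + tau) * phi3 w0 w1 wb.
Proof.
intros h0 h1 hb; rewrite (phi_sym w0) (phi_sym 0) (phi_sym w0 w1).
by apply phi_query0.
Qed.

End Reals.
Open Scope R_scope.

Lemma exp_pow_eq x k : exp x ^ k = exp (x * INR k).
Proof.
elim: k => [|k IH]; first by rewrite /= Rmult_0_r exp_0.
rewrite /pow -/pow IH S_INR -exp_plus; f_equal; ring.
Qed.

Lemma ln2_12 : 6 < ln (2 ^ 12).
Proof. rewrite ln_pow; last lra. have := ln_lt_2. simpl INR. lra. Qed.

Lemma final_num (p : R) (n d m : nat) : 0 < p -> p < 1 ->
  (2 ^ 12 <= n)%nat -> (1 <= m)%nat -> (m <= (n + n).+1)%nat ->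
  INR d < / (24 * cP p) * INR m * ln (INR m) ->
  (1 + tau p (/ (2 * INR n))) ^ d * (phi3 (/ (2 * INR n)) (/4) (/4) (/2)) ^ n < / 2.
Proof.
move=> p0 p1 hn hm1 hm hd.
set N := INR n in hd *. set L := ln N. set c := cP p in hd *.
have hc : 1 <= c := @c1_ge1 p p0 p1.
have HN : 2 ^ 12 <= N by rewrite /N (_ : 2 = INR 2) // -pow_INR; apply: le_INR; apply/leP.
have HN0 : 0 < N by lra.
have HL : 6 < L.
  have := ln2_12. have := ln_le' (2 ^ 12) N ltac:(lra) HN. rewrite /L. lra.
have HLN : 1 + L <= N by apply one_ln.
set th := / (2 * N).
have Hphi : phi3 th (/4) (/4) (/2) = 1 - (1 + L) / (4 * N).
  have HG : G th (/4) (/2) = (1 + L) / (4 * N).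
    rewrite /G. case: (Rle_dec (/4) (th * /2)) => h; cbv [is_left].
      exfalso. move: h. rewrite /th. apply: Rlt_not_le.
      apply (Rmult_lt_reg_r (4 * N)); first lra.
      have -> : / (2 * N) * / 2 * (4 * N) = 1 by field; lra.
      have -> : / 4 * (4 * N) = N by field. lra.
    have -> : / 4 / (th * / 2) = N by rewrite /th; field; lra.
    by rewrite /th -/L; field; lra.
  by rewrite /phi3 HG Rmin_left; [field; lra | lra].
rewrite Hphi.
set x := (1 + L) / (4 * N).
have hx0 : 0 <= x by rewrite /x; left; apply: Rdiv_lt_0_compat; lra.
have hx1 : x <= 1 by rewrite /x; apply (Rmult_le_reg_r (4 * N)); [lra | field_simplify; lra].
set t := tau p th.
have ht : 0 < t by rewrite /t /tau /th -/c; apply: Rmult_lt_0_compat; [apply: Rinv_0_lt_compat|]; lra.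
have E1 : (1 + t) ^ d <= exp (t * INR d).
  rewrite -exp_pow_eq; apply: pow_incr; have := exp_ineq1_le t; lra.
have E2 : (1 - x) ^ n <= exp (- x * N).
  rewrite /N -exp_pow_eq; apply: pow_incr; have := exp_ineq1_le (- x); lra.
have Hxn : - x * N = - (1 + L) / 4 by rewrite /x; field; lra.
set M := INR m in hd *.
have HM1 : 1 <= M by rewrite /M; apply: (le_INR 1); apply/leP.
have HM : M <= 3 * N.
  have : M <= 2 * N + 1 by rewrite /M /N; have := le_INR _ _ (elimT leP hm); rewrite S_INR plus_INR -/(addn n n) ; lra.
  lra.
have HMN : M <= N * N by nra.
have HlnM : ln M <= 2 * L.
  have := ln_le' M (N * N) ltac:(lra) HMN. rewrite ln_mult; [rewrite -/L; lra|lra|lra].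
have HlnM0 : 0 <= ln M by rewrite -ln_1; apply: ln_le'; lra.
have Hd2 : INR d < N * L / (4 * c).
  apply: (Rlt_le_trans _ _ _ hd).
  have -> : N * L / (4 * c) = / (24 * c) * (3 * N) * (2 * L) by field; lra.
  have hc0 : 0 <= / (24 * c) by left; apply: Rinv_0_lt_compat; lra.
  apply: Rmult_le_compat.
  - by apply: Rmult_le_pos; lra.
  - exact HlnM0.
  - by apply: Rmult_le_compat_l.
  - exact HlnM.
have Htd : t * INR d <= L / 8.
  have -> : t = c / (2 * N) by rewrite /t /tau /th -/c; field; lra.
  have -> : L / 8 = c / (2 * N) * (N * L / (4 * c)) by field; lra.
  apply: Rmult_le_compat_l; [left; apply: Rdiv_lt_0_compat|]; lra.
have Hexp : exp (-1) < / 2.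
  have Hex1 : 2 < exp 1 by have := exp_ineq1 1 ltac:(apply: R1_neq_R0); lra.
  rewrite exp_Ropp. apply: (Rinv_lt_contravar 2 (exp 1)); [apply: Rmult_lt_0_compat; lra | exact Hex1].
apply: (Rle_lt_trans _ (exp (t * INR d) * exp (- x * N))).
  apply: Rmult_le_compat; try apply: pow_le; lra.
rewrite -exp_plus Hxn; apply: (Rlt_trans _ (exp (-1))) => //.
apply: exp_increasing; lra.
Qed.

Close Scope R_scope.

Set Implicit Arguments.
Unset Strict Implicit.
Unset Printing Implicit Defensive.

Section Pairs.
Variables (n r : nat).
Definition Vt : finType := 'I_n.+1.
Definition Et : finType := ('I_n * bool + 'I_r)%type.
Definition endsP (e : Et) : Vt * Vt :=
  match e with inl (i, _) => (inord i, inord i.+1) | inr _ => (ord0, ord0) end.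
Definition remd (o : option bool) (b : bool) : bool := o == Some b.
Definition Rzs (s : {ffun 'I_n -> option bool}) : {set Et} :=
  [set e : Et | match e with inl (i, b) => ~~ remd (s i) b | inr _ => true end].

Lemma adj_sym (S : {set Et}) : symmetric (adj endsP S).
Proof.
move=> x y; rewrite /adj; apply/existsP/existsP => -[e He]; exists e;
  by rewrite orbC.
Qed.

Lemma connect_chain (S : {set Et}) :
  (forall i : 'I_n, exists b, inl (i, b) \in S) ->
  forall u v, connect (adj endsP S) u v.
Proof.
move=> H.
have H0 : forall k, k <= n -> connect (adj endsP S) ord0 (inord k).
  elim=> [|k IH] hk.
    by rewrite (_ : inord 0 = ord0) //; apply/val_inj; rewrite /= inordK.
  apply: connect_trans (IH (ltnW hk)) _; apply: connect1.
  have [b hb] := H (Ordinal hk).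
  apply/existsP; exists (inl (Ordinal hk, b)); rewrite hb /=.
  by rewrite eqxx.
move=> u v.
have Hu : connect (adj endsP S) ord0 u.
  by rewrite -(inord_val u); apply: H0; rewrite -ltnS.
have Hv : connect (adj endsP S) ord0 v.
  by rewrite -(inord_val v); apply: H0; rewrite -ltnS.
apply: connect_trans Hv; by rewrite (sym_connect_sym (@adj_sym S)).
Qed.

Lemma Rzs_conn s : admissible_realization endsP (Rzs s).
Proof.
apply/forallP => u; apply/forallP => v; apply: connect_chain => i.
exists (if s i is Some c then ~~ c else false); rewrite inE /remd.
by case: (s i) => // -[].
Qed.

Lemma cut_conn (S : {set Et}) (i : 'I_n) :
  (forall b, inl (i, b) \notin S) ->
  forall u v, connect (adj endsP S) u v -> (u <= i) = (v <= i).
Proof.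
move=> H u v /connectP [s]; elim: s u => [|w s IH] u /=.
  by move=> _ ->.
move=> /andP [Huw Hp] Hv; rewrite -(IH w Hp Hv).
move: Huw => /existsP [e /andP [He Hends]].
case: e He Hends => [[j b]|z] He /=.
  have Hji : j != i by apply: contraTneq He => ->; exact: H.
  have Hj1 : j < n.+1 by rewrite ltnS ltnW.
  have Hj2 : j.+1 < n.+1 by rewrite ltnS.
  have Hji' : (j : nat) != i by [].
  case/orP => /eqP [<- <-]; rewrite !inordK //;
  by case: ltngtP Hji' => // _ _; case: ltngtP.
by case/orP => /eqP [<- <-].
Qed.

Lemma both_conn (T : {set Et}) (i : 'I_n) :
  inl (i, false) \in T -> inl (i, true) \in T ->
  connectedS endsP T -> connectedS endsP (T :\ inl (i, false)).
Proof.
move=> h0 h1 /forallP Hc; apply/forallP => u; apply/forallP => v.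
move/forallP: (Hc u) => /(_ v); apply: connect_sub => x y.
move=> /existsP [e /andP [He Hends]]; apply: connect1; apply/existsP.
case: (e =P inl (i, false)) => [Ee|Ne].
  exists (inl (i, true)); subst e; rewrite in_setD1 h1 /=.
  by apply/andP; split; [rewrite andbT; apply/eqP => -[] | exact: Hends].
by exists e; rewrite in_setD1 He andbT Hends andbT; apply/eqP.
Qed.

Definition chi (T : {set Et}) (i : 'I_n) (s : option bool) : bool :=
  [exists b, [&& inl (i, b) \in T, inl (i, ~~ b) \notin T & s != Some b]].

Lemma tree_chi T s : spanning_tree endsP T -> T \subset Rzs s ->
  forall i, chi T i (s i).
Proof.
move=> /andP [Hc Ht] Hsub i.
have [b Hb] : exists b, inl (i, b) \in T.
  case E0: (inl (i, false) \in T); first by exists false.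
  case E1: (inl (i, true) \in T); first by exists true.
  exfalso.
  move/forallP: Hc => /(_ ord0) /forallP /(_ ord_max) Hcon.
  have Hn : (n <= i) = false by apply/negbTE; rewrite -ltnNge.
  have Hnb : forall b, inl (i, b) \notin T by case; rewrite ?E0 ?E1.
  by have := @cut_conn T i Hnb ord0 ord_max Hcon; rewrite /= Hn.
apply/existsP; exists b.
have Hnb : inl (i, ~~ b) \notin T.
  apply/negP => Hnb; move/forall_inP: Ht => /(_ (inl (i, false))).
  case: b Hb Hnb => Hb Hnb.
    by move=> /(_ Hnb) /negP; apply; apply: both_conn.
  by move=> /(_ Hb) /negP; apply; apply: both_conn.
rewrite Hb Hnb /=.
by have := subsetP Hsub _ Hb; rewrite inE /remd.
Qed.

End Pairs.

From mathcomp Require Import all_order all_algebra.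
From mathcomp Require Import Rstruct.
Import Order.TTheory GRing.Theory Num.Theory.

Set Implicit Arguments.
Unset Strict Implicit.
Unset Printing Implicit Defensive.

Ltac toR := rewrite -?RplusE -?RmultE -?RminusE -?RoppE;
  try change (@Algebra.zero _) with (IZR Z0);
  try change (@GRing.one _) with (IZR (Zpos xH)).

Section Prob.
Local Open Scope ring_scope.
Variables (n r : nat) (p th : R).
Hypotheses (p0 : Rlt 0 p) (p1 : Rlt p 1) (th0 : Rlt 0 th).

Notation sgT := {ffun 'I_n -> option bool}.
Definition muP (h : 'I_n -> option bool -> R) (s : sgT) : R := \prod_(i < n) h i (s i).
Definition W (A : alg (Et n r)) h : R :=
  \sum_(s : sgT) muP h s * success_prob (@endsP n r) p (@Rzs n r s) A.
Definition phih (h : 'I_n -> option bool -> R) (i : 'I_n) : R :=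
  phi3 th (h i (Some false)) (h i (Some true)) (h i None).
Definition lam : R := 1 + tau p th.
Definition nonnegH (h : 'I_n -> option bool -> R) := forall i o, 0 <= h i o.
Definition upd (h : 'I_n -> option bool -> R) (i : 'I_n) (k : option bool -> R) :=
  fun j o => if j == i then k o * h j o else h j o.

Lemma nnR h i o : nonnegH h -> Rle 0 (h i o).
Proof. by move=> hh; apply/RleP; apply: hh. Qed.

Lemma sum_opt (F : option bool -> R) :
  \sum_(o : option bool) F o = F None + F (Some false) + F (Some true).
Proof.
rewrite (bigD1 None) //= (bigD1 (Some false)) //= (bigD1 (Some true)) //= big1.
  by rewrite addr0 addrA.
by case => [[]|].
Qed.

Lemma muP_ge0 h s : nonnegH h -> 0 <= muP h s.
Proof. by move=> hh; apply: prodr_ge0 => i _. Qed.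

Lemma phih_ge0 h i : nonnegH h -> 0 <= phih h i.
Proof.
move=> hh; apply/RleP.
have h0 := nnR i (Some false) hh; have h1 := nnR i (Some true) hh.
have hb := nnR i None hh.
have := @phi_out th th0 _ _ _ h0 h1 hb; have := Rmax_l (h i (Some false)) (h i (Some true)).
rewrite /phih; toR; intros; lra.
Qed.

Lemma lam_ge1 : 1 <= lam.
Proof.
apply/RleP; rewrite /lam /tau.
have := @c1_ge1 p p0 p1; move=> hc.
have : Rle 0 (th * cP p) by apply: Rmult_le_pos; lra.
toR; lra.
Qed.

Lemma muP_upd h i k s : muP (upd h i k) s = muP h s * k (s i).
Proof.
rewrite /muP (bigD1 i) //= [in RHS](bigD1 i) //= /upd eqxx.
rewrite (eq_bigr (fun j => h j (s j))); last by move=> j /negbTE ->.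
by rewrite -mulrA mulrC.
Qed.

Lemma prod_upd h i k :
  \prod_(j < n) phih (upd h i k) j = phih (upd h i k) i * \prod_(j < n | j != i) phih h j.
Proof.
rewrite (bigD1 i) //=; congr (_ * _); apply: eq_bigr => j hj.
by rewrite /phih /upd (negbTE hj).
Qed.

Lemma prod_split h i :
  \prod_(j < n) phih h j = phih h i * \prod_(j < n | j != i) phih h j.
Proof. by rewrite (bigD1 i). Qed.

Lemma W_zero A h : (forall s, muP h s != 0 -> False) -> W A h = 0.
Proof.
move=> H; rewrite /W big1 // => s _.
by case: (eqVneq (muP h s) 0) => [->|/H]; [rewrite mul0r|].
Qed.

Definition chiR (T : {set Et n r}) i o : R := (chi T i o)%:R.

Lemma chi_val (T : {set Et n r}) i o :
  chi T i o = ((inl (i, false) \in T) && (inl (i, true) \notin T) && (o != Some false))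
           || ((inl (i, true) \in T) && (inl (i, false) \notin T) && (o != Some true)).
Proof.
apply/existsP/orP => [[[] /and3P [x y z]]|[/andP [/andP [x y] z]|/andP [/andP [x y] z]]].
- by right; rewrite x y z.
- by left; rewrite x y z.
- by exists false; rewrite x y z.
- by exists true; rewrite x y z.
Qed.

Lemma W_out h T : nonnegH h -> W (Out T) h <= \prod_(i < n) phih h i.
Proof.
move=> hh.
apply: (@le_trans _ _ (\sum_(s : sgT) \prod_(i < n) (h i (s i) * chiR T i (s i)))).
  apply: ler_sum => s _ /=.
  case: ifP => [/andP [Ht Hs]|_].
    rewrite mulr1 /muP [X in _ <= X](eq_bigr (fun i => h i (s i))) //.
    by move=> i _; rewrite /chiR (tree_chi Ht Hs) mulr1.
  by rewrite mulr0; apply: prodr_ge0 => i _; apply: mulr_ge0 => //; rewrite /chiR ler0n.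
rewrite -(bigA_distr_bigA (fun i o => h i o * chiR T i o)) /=.
apply: ler_prod => i _; apply/andP; split.
  by apply: sumr_ge0 => o _; apply: mulr_ge0 => //; rewrite /chiR ler0n.
rewrite sum_opt /chiR !chi_val /=.
have h0 := nnR i (Some false) hh; have h1 := nnR i (Some true) hh.
have hb := nnR i None hh.
have := @phi_out th th0 _ _ _ h0 h1 hb; have := Rmax_l (h i (Some false)) (h i (Some true)).
have := Rmax_r (h i (Some false)) (h i (Some true)).
rewrite /phih => m1 m2 hp; apply/RleP.
case: (inl (i, false) \in T); case: (inl (i, true) \in T) => /=;
  rewrite ?mulr1 ?mulr0 ?addr0 ?add0r -?RplusE; toR; lra.
Qed.

Lemma W_coin q a c h :
  W (Coin q a c) h = clamp01 q * W a h + (1 - clamp01 q) * W c h.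
Proof.
rewrite /W !mulr_sumr -big_split; apply: eq_bigr => s _ /=.
toR; ring.
Qed.

Lemma clamp_bounds q : Rle 0 (clamp01 q) /\ Rle (clamp01 q) 1.
Proof.
rewrite /clamp01; split; last exact: Rmin_l.
apply: Rmin_glb; [lra | exact: Rmax_l].
Qed.

Lemma prodphi_ge0 h : nonnegH h -> 0 <= \prod_(i < n) phih h i.
Proof. by move=> hh; apply: prodr_ge0 => j _; apply: phih_ge0. Qed.

Lemma main_ind A : forall h (d : nat), nonnegH h ->
  (forall s, muP h s != 0 -> (query_cost (@Rzs n r s) A <= d)%nat) ->
  W A h <= lam ^+ d * \prod_(i < n) phih h i.
Proof.
elim: A => [T|q a IHa c IHc|e a IHa c IHc] h d hh hcost.
- apply: (le_trans (W_out T hh)).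
  apply: ler_peMl; first exact: prodphi_ge0.
  exact: exprn_ege1 lam_ge1.
- rewrite W_coin; have [q0 q1] := clamp_bounds q.
  move: hcost => /=; case: Rle_dec => Hq0 hcost.
    have -> : clamp01 q = 0 by apply: Rle_antisym.
    by rewrite mul0r add0r subr0 mul1r; apply: IHc.
  case: Rle_dec hcost => Hq1 hcost.
    have -> : clamp01 q = 1 by apply: Rle_antisym.
    by rewrite subrr mul0r addr0 mul1r; apply: IHa.
  have Ha := IHa h d hh (fun s hs => leq_trans (leq_maxl _ _) (hcost s hs)).
  have Hc := IHc h d hh (fun s hs => leq_trans (leq_maxr _ _) (hcost s hs)).
  set B := lam ^+ d * _ in Ha Hc *.
  have q0' : 0 <= clamp01 q by apply/RleP.
  have q1' : 0 <= 1 - clamp01 q by rewrite subr_ge0; apply/RleP.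
  apply: (le_trans (lerD (ler_wpM2l q0' Ha) (ler_wpM2l q1' Hc))).
  by rewrite -mulrDl addrCA subrr addr0 mul1r.
- case: e hcost => [[i b]|z] hcost.
  + set k1 := fun o : option bool => if remd o b then p else 1.
    set k2 := fun o : option bool => if remd o b then 1 - p else 0.
    have HW : W (Query (inl (i, b)) a c) h = W a (upd h i k1) + W c (upd h i k2).
      rewrite /W -big_split; apply: eq_bigr => s _ /=.
      rewrite !muP_upd inE /k1 /k2.
      case E: (remd (s i) b) => /=.
        by rewrite mulrDr !mulrA.
      by rewrite mulr1 mulr0 mul0r addr0.
    case: d hcost => [|d] hcost.
      rewrite W_zero; first by rewrite expr0 mul1r; apply: prodphi_ge0.
      by move=> s /hcost /=; rewrite ltn0.
    have hp0 : 0 <= p by apply/RleP; toR; lra.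
    have hp1 : 0 <= 1 - p by apply/RleP; toR; lra.
    have hh1 : nonnegH (upd h i k1).
      move=> j o; rewrite /upd; case: (j == i) => //; apply: mulr_ge0 => //.
      by rewrite /k1; case: (remd o b).
    have hh2 : nonnegH (upd h i k2).
      move=> j o; rewrite /upd; case: (j == i) => //; apply: mulr_ge0 => //.
      by rewrite /k2; case: (remd o b).
    have Ha : W a (upd h i k1) <= lam ^+ d * \prod_(j < n) phih (upd h i k1) j.
      apply: IHa => // s; rewrite muP_upd => hs.
      have hs0 : muP h s != 0 by apply: contraNneq hs => ->; rewrite mul0r.
      have := hcost s hs0; rewrite /= inE ltnS.
      by case: ifP => _ H //; apply: leq_trans (leq_maxl _ _) H.
    have Hc : W c (upd h i k2) <= lam ^+ d * \prod_(j < n) phih (upd h i k2) j.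
      apply: IHc => // s; rewrite muP_upd => hs.
      have hs0 : muP h s != 0 by apply: contraNneq hs => ->; rewrite mul0r.
      have hsi : remd (s i) b.
        by move: hs; rewrite /k2; case: (remd (s i) b) => //; rewrite mulr0 eqxx.
      have := hcost s hs0; rewrite /= inE hsi /= ltnS.
      by move=> H; apply: leq_trans (leq_maxr _ _) H.
    rewrite HW; apply: (le_trans (lerD Ha Hc)).
    rewrite (prod_upd h i k1) (prod_upd h i k2) (prod_split h i) exprS.
    rewrite -mulrDr -mulrDl.
    have Hl : 0 <= lam ^+ d by apply: exprn_ge0; apply: le_trans lam_ge1.
    have HP : 0 <= \prod_(j < n | j != i) phih h j.
      by apply: prodr_ge0 => j _; apply: phih_ge0.
    have Hkey : phih (upd h i k1) i + phih (upd h i k2) i <= lam * phih h i.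
      have h0 := nnR i (Some false) hh; have h1 := nnR i (Some true) hh.
      have hb := nnR i None hh.
      rewrite /phih /upd eqxx /k1 /k2.
      case: b {k1 k2 HW Ha Hc hcost hh1 hh2} => /=; rewrite !mul1r !mul0r; apply/RleP.
        exact: (@phi_query1 p th p0 p1 th0 _ _ _ h0 h1 hb).
      exact: (@phi_query0 p th p0 p1 th0 _ _ _ h0 h1 hb).
    apply: (le_trans (ler_wpM2l Hl (ler_wpM2r HP Hkey))).
    by rewrite !mulrA (mulrC (lam ^+ d) lam).
  + have HW : W (Query (inr z) a c) h = W a h.
      by rewrite /W; apply: eq_bigr => s _ /=; rewrite inE.
    case: d hcost => [|d] hcost.
      rewrite W_zero; first by rewrite expr0 mul1r; apply: prodphi_ge0.
      by move=> s /hcost /=; rewrite ltn0.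
    rewrite HW; apply: (le_trans (IHa h d hh _)).
      by move=> s /hcost; rewrite /= inE ltnS.
    rewrite exprS -mulrA; apply: ler_peMl; last exact: lam_ge1.
    apply: mulr_ge0; last exact: prodphi_ge0.
    by apply: exprn_ge0; apply: le_trans lam_ge1.
Qed.

End Prob.

Set Implicit Arguments.
Unset Strict Implicit.
Unset Printing Implicit Defensive.


Section Final.
Local Open Scope ring_scope.

Lemma prod_constR (x : R) k : \prod_(i < k) x = x ^+ k.
Proof. by rewrite big_const_ord; elim: k => //= k ->; rewrite exprS. Qed.

Lemma exprE (x : R) (k : nat) : x ^+ k = pow x k.
Proof. by elim: k => [|k IH] //=; rewrite exprS IH. Qed.

Lemma lower (p : R) (Hp0 : Rlt 0 p) (Hp1 : Rlt p 1) (m : nat) (hm : (2 ^ 13 <= m)%nat) :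
  forall A : alg (Et m./2 (odd m)),
  (forall Rz, admissible_realization (@endsP m./2 (odd m)) Rz ->
     Rle (Rminus 1 (Rinv 2)) (success_prob (@endsP m./2 (odd m)) p Rz A)) ->
  exists Rz, admissible_realization (@endsP m./2 (odd m)) Rz /\
    Rle (Rmult (Rmult (Rinv (Rmult 24 (cP p))) (INR m)) (ln (INR m)))
        (INR (query_cost Rz A)).
Proof.
set n := m./2; set r := odd m; move=> A HA.
set X := Rmult (Rmult (Rinv (Rmult 24 (cP p))) (INR m)) (ln (INR m)).
case: (classic (exists s : {ffun 'I_n -> option bool},
                  Rle X (INR (query_cost (@Rzs n r s) A)))) => [[s Hs]|Hno].
  by exists (@Rzs n r s); split; [apply: Rzs_conn|].
exfalso.
have Hall : forall s : {ffun 'I_n -> option bool}, Rlt (INR (query_cost (@Rzs n r s) A)) X.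
  by move=> s; apply: Rnot_le_lt => H; apply: Hno; exists s.
set d := \max_(s : {ffun 'I_n -> option bool}) query_cost (@Rzs n r s) A.
have Hd : forall s : {ffun 'I_n -> option bool}, (query_cost (@Rzs n r s) A <= d)%nat.
  by move=> s; apply: (@leq_bigmax _ (fun s => query_cost (@Rzs n r s) A)).
have HdX : Rlt (INR d) X by rewrite /d (@bigop.bigmax_eq_arg _ [ffun=> None]) //; apply: Hall.
have Hn : (2 ^ 12 <= n)%nat by rewrite /n (_ : 2 ^ 12 = (2 ^ 13)./2)%nat //; apply: half_leq.
have HnR : Rlt 0 (INR n).
  apply: (lt_INR 0); apply/ssrnat.ltP; apply: leq_trans Hn; by [].
set th := Rinv (Rmult 2 (INR n)).
have th0 : Rlt 0 th by apply: Rinv_0_lt_compat; lra.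
set h0 := fun (i : 'I_n) (o : option bool) => if o is Some _ then Rinv 4 else Rinv 2.
have hh : nonnegH h0.
  move=> i o; apply/RleP; rewrite /h0; case: o => [_|]; toR;
  apply: Rlt_le; apply: Rinv_0_lt_compat; lra.
have Hp1' : Rlt p 1 by lra.
have Up := @main_ind n r p th Hp0 Hp1' th0 A h0 d hh (fun s _ => Hd s).
have HP : \prod_(i < n) phih th h0 i = (phi3 th (Rinv 4) (Rinv 4) (Rinv 2)) ^+ n.
  by rewrite (eq_bigr (fun _ => phi3 th (Rinv 4) (Rinv 4) (Rinv 2))) // prod_constR.
rewrite HP /lam !exprE in Up.
have Lo : Rinv 2 <= W p A h0.
  apply: (@le_trans _ _ (\sum_(s : {ffun 'I_n -> option bool}) muP h0 s * Rinv 2)).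
    rewrite -mulr_suml /muP -(bigA_distr_bigA (fun i o => h0 i o)) /=.
    rewrite (eq_bigr (fun _ => 1)); first by rewrite prod_constR expr1n mul1r.
    move=> i _; rewrite sum_opt /h0.
    have E : Rplus (Rplus (Rinv 2) (Rinv 4)) (Rinv 4) = IZR 1 by field.
    exact: E.
  apply: ler_sum => s _; apply: ler_wpM2l; first exact: muP_ge0.
  apply/RleP; have := HA _ (@Rzs_conn n r s); lra.
have Fn := @final_num p n d m Hp0 Hp1' Hn _ _ HdX.
move/RleP: Lo => Lo; move/RleP: Up => Up.
have : (1 <= m)%nat by apply: leq_trans hm.
move=> /Fn {}Fn.
have : (m <= (n + n).+1)%nat.
  by rewrite -{1}(odd_double_half m) -/n -addnn; case: (odd m).
move=> /Fn {}Fn.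
rewrite /th -RmultE in Up; lra.
Qed.

End Final.

Delimit Scope nat_scope with N.
Delimit Scope R_scope with R.

Theorem lemma8 :
  forall p : R, (0 < p)%R -> (p < 1 / 2)%R ->
  exists delta c : R, (0 < delta)%R /\ (0 < c)%R /\
  exists m0 : nat, forall m : nat, (m0 <= m)%N ->
    exists (V E : finType) (ends : E -> V * V),
      #|E| = m /\
      forall A : alg E,
        (forall Rz : {set E}, admissible_realization ends Rz ->
           (1 - delta <= success_prob ends p Rz A)%R) ->
        exists Rz : {set E}, admissible_realization ends Rz /\
          (c * INR m * ln (INR m) <= INR (query_cost Rz A))%R.
Proof.
move=> p Hp0 Hp1.
have Hp1' : Rlt p 1 by lra.
exists (Rinv 2), (Rinv (Rmult 24 (cP p))).
split; first by apply: Rinv_0_lt_compat; lra.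
split; first by apply: Rinv_0_lt_compat; have := @c1_ge1 p Hp0 Hp1'; lra.
exists (2 ^ 13)%nat => m hm.
exists (Vt m./2), (Et m./2 (odd m)), (@endsP m./2 (odd m)); split.
  by rewrite /Et card_sum card_prod !card_ord card_bool muln2 addnC odd_double_half.
move=> A HA; exact: (lower Hp0 Hp1' hm HA).
Qed.
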